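(* Let $\Omega_m$ be a finite set with $m$ elements, $\mathcal F=2^{\Omega_m}$. (a) For any set function $v:2^{\Omega_m}\to[0,\infty)$ and $A,B\subset\Omega_m$, if $A=\emptyset$, or $B=\emptyset$, or $A=\Omega_m$, or $B=\Omega_m$, or $A\subset B$, or $A\supset B$, or $A=B$, then $v(A\cap B)+v(A\cup B)=v(A)+v(B)$. (b) Let $v_0:2^{\Omega_m}\to[0,\infty)$ be non-decreasing with $v_0(\emptyset)=0$ and define $v_{n+1}(A)=\sup_{\mathcal I\in\Sigma}\mu_{v_n,\mathcal I}(A)$, $A\subset\Omega_m$, $n\ge0$. Then for every $n\ge1$ and $A,B\subset\Omega_m$, if $A\cap B=\emptyset$, or $A\cup B=\Omega_m$, or $|A|=1$, or $|A|=m-1$, then $v_n(A\cap B)+v_n(A\cup B)\le v_n(A)+v_n(B)$.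
   Context: $\Sigma$ denotes the set of all chains $\mathcal I\subset 2^{\Omega_m}$ (totally ordered by inclusion) containing $\emptyset$ and $\Omega_m$ and generating $2^{\Omega_m}$ as a $\sigma$-algebra (equivalently, maximal chains $\{\emptyset,\{\omega_{i_1}\},\{\omega_{i_1},\omega_{i_2}\},\dots,\Omega_m\}$ for an ordering $\omega_{i_1},\dots,\omega_{i_m}$ of $\Omega_m$). For non-decreasing $v$ and $\mathcal I\in\Sigma$, $\mu_{v,\mathcal I}$ is the unique (additive) measure on $2^{\Omega_m}$ with $\mu_{v,\mathcal I}(I)=v(I)$ for all $I\in\mathcal I$. A set function is non-decreasing if $v(A)\le v(B)$ for $A\subset B$. *)

(* Defs.v *)
From HB Require Import structures.
From mathcomp Require Import reals.
From mathcomp Require Import all_boot all_order all_algebra.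
Set Implicit Arguments. Unset Strict Implicit. Unset Printing Implicit Defensive.
Import Order.TTheory GRing.Theory Num.Theory.
Local Open Scope ring_scope.

(* A family of subsets of T is a sigma-algebra (T finite, so finite unions suffice). *)
Definition is_sigma_algebra (T : finType) (F : {set {set T}}) : Prop :=
  set0 \in F /\ (forall A, A \in F -> ~: A \in F) /\
  (forall A B, A \in F -> B \in F -> A :|: B \in F).

Definition in_gen_sigma (T : finType) (G : {set {set T}}) (S : {set T}) : Prop :=
  forall F : {set {set T}}, is_sigma_algebra F -> G \subset F -> S \in F.

Definition is_chain (T : finType) (C : {set {set T}}) : Prop :=
  forall A B, A \in C -> B \in C -> (A \subset B) || (B \subset A).

Definition Sigma_chain (T : finType) (C : {set {set T}}) : Prop :=
  is_chain C /\ set0 \in C /\ [set: T] \in C /\ (forall S, in_gen_sigma C S).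

Definition nondecreasing_sf (T : finType) (R : realType) (v : {set T} -> R) : Prop :=
  forall A B : {set T}, A \subset B -> v A <= v B.

Definition additive_sf (T : finType) (R : realType) (mu : {set T} -> R) : Prop :=
  mu set0 = 0 /\
  (forall A B : {set T}, [disjoint A & B] -> mu (A :|: B) = mu A + mu B).

(* mu is the (unique) additive measure mu_{v,C} agreeing with v on the chain C *)
Definition is_mu_v_I (T : finType) (R : realType) (v : {set T} -> R)
    (C : {set {set T}}) (mu : {set T} -> R) : Prop :=
  additive_sf mu /\ (forall I, I \in C -> mu I = v I).

Definition sup_chain_measures (T : finType) (R : realType) (v : {set T} -> R)
    (A : {set T}) : R :=
  sup (fun x : R => exists (C : {set {set T}}) (mu : {set T} -> R),
         Sigma_chain C /\ is_mu_v_I v C mu /\ x = mu A).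

(* Main.v *)
Require Import Defs.
From HB Require Import structures.
From mathcomp Require Import reals.
From mathcomp Require Import all_boot all_order all_algebra.
From mathcomp Require Import lra.
From Stdlib Require Import Classical.
Import Order.TTheory GRing.Theory Num.Theory.
Local Open Scope ring_scope.


Lemma sep_lemma (T : finType) (C : {set {set T}}) :
  Sigma_chain C -> forall a b : T, a != b ->
  exists I, I \in C /\ (a \in I) != (b \in I).
Proof.
move=> [_ [_ [_ gen]]] a b ab.
pose F := [set X : {set T} | [forall x, forall y, ((x \in X) && (y \notin X)) ==>
             [exists I in C, (x \in I) != (y \in I)]]].
have: [set a] \in F.
  apply: gen; last first.
    apply/subsetP => I IC; rewrite inE; apply/forallP => x; apply/forallP => y.
    apply/implyP => /andP [xI yI]; apply/existsP; exists I; rewrite IC /=.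
    by rewrite xI (negbTE yI).
  split; first by rewrite inE; apply/forallP => x; apply/forallP => y; rewrite inE.
  split.
    move=> A; rewrite !inE => /forallP H; apply/forallP => x; apply/forallP => y.
    apply/implyP; rewrite !inE negbK => /andP [xA yA].
    have /forallP/(_ x)/implyP := H y; rewrite yA xA => /(_ isT) /existsP [I /andP [IC hI]].
    by apply/existsP; exists I; rewrite IC eq_sym.
  move=> A B; rewrite !inE => /forallP HA /forallP HB.
  apply/forallP => x; apply/forallP => y; apply/implyP; rewrite !inE negb_or.
  case/andP => /orP [xA|xB] /andP [yA yB].
    by have /forallP/(_ y)/implyP := HA x; rewrite xA yA; apply.
  by have /forallP/(_ y)/implyP := HB x; rewrite xB yB; apply.
rewrite inE => /forallP/(_ a)/forallP/(_ b)/implyP.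
rewrite !inE eqxx eq_sym ab => /(_ isT) /existsP [I /andP [IC hI]].
by exists I.
Qed.

Lemma atom_lemma (T : finType) (C : {set {set T}}) :
  Sigma_chain C -> forall a : T,
  exists I J, [/\ I \in C, J \in C, a \notin J & I = [set a] :|: J].
Proof.
move=> SC a; have [ch [C0 [CT _]]] := SC.
have P0 : (([set: T] \in C) && (a \in [set: T])) by rewrite CT inE.
case: (@arg_minnP _ [set: T] (fun I => (I \in C) && (a \in I)) (fun I : {set T} => #|I|) P0) => I /andP [IC aI] Imin.
have P1 : ((set0 \in C) && (a \notin (set0 : {set T}))) by rewrite C0 inE.
case: (@arg_maxnP _ set0 (fun I => (I \in C) && (a \notin I)) (fun I : {set T} => #|I|) P1) => J /andP [JC aJ] Jmax.
have Ismall : forall K, K \in C -> a \in K -> I \subset K.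
  move=> K KC aK; case/orP: (ch _ _ IC KC) => // KI.
  have := Imin K; rewrite KC aK => /(_ isT) cIK.
  by have /eqP -> : K == I by rewrite eqEcard KI cIK.
have Jbig : forall K, K \in C -> a \notin K -> K \subset J.
  move=> K KC aK; case/orP: (ch _ _ JC KC) => // JK.
  have := Jmax K; rewrite KC aK => /(_ isT) cJK.
  by have /eqP -> : K == J by rewrite eq_sym eqEcard JK /=; exact: cJK.
exists I, J; split => //.
apply/setP => x; rewrite !inE.
case: (eqVneq x a) => [->|xa] /=; first by [].
apply/idP/idP => [xI|xJ].
  apply/negPn/negP => xJ.
  have [K [KC hK]] := @sep_lemma _ C SC x a xa.
  case aK: (a \in K); rewrite aK in hK.
    have xK : x \notin K by move: hK; case: (x \in K).
    by move: (subsetP (Ismall K KC aK) x xI); rewrite (negbTE xK).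
  have xK : x \in K by move: hK; case: (x \in K).
  by move: (subsetP (Jbig K KC (negbT aK)) x xK); rewrite (negbTE xJ).
case/orP: (ch _ _ IC JC) => [/subsetP IJ|/subsetP JI]; last exact: JI.
by move: (IJ a aI); rewrite (negbTE aJ).
Qed.


Lemma norm_le_sum (T : finType) (R : realType) (v : {set T} -> R) X :
  `|v X| <= \sum_(Y : {set T}) `|v Y|.
Proof.
rewrite (bigD1 X) //= lerDl sumr_ge0 // => *; exact: normr_ge0.
Qed.

Lemma mu_single (T : finType) (R : realType) (v : {set T} -> R) C mu a :
  Sigma_chain C -> is_mu_v_I v C mu ->
  mu [set a] <= 2 * \sum_(Y : {set T}) `|v Y|.
Proof.
move=> SC [[mu0 muD] muv].
have [I [J [IC JC aJ eI]]] := @atom_lemma _ C SC a; rewrite eI in IC.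
have := muD [set a] J; rewrite disjoints1 => /(_ aJ) e.
have e2 : mu [set a] = v ([set a] :|: J) - v J by rewrite -muv // -(muv J) // e; lra.
rewrite e2.
have h1 := @norm_le_sum _ _ v ([set a] :|: J); have h2 := @norm_le_sum _ _ v J.
have h3 := ler_norm (v ([set a] :|: J)); have h4 := ler_norm (- v J).
rewrite normrN in h4. lra.
Qed.

Lemma mu_bound (T : finType) (R : realType) (v : {set T} -> R) C mu :
  Sigma_chain C -> is_mu_v_I v C mu -> forall A,
  mu A <= #|A|%:R * (2 * \sum_(Y : {set T}) `|v Y|).
Proof.
move=> SC Hmu; have [[mu0 muD] _] := Hmu.
move=> A; move Hn: #|A| => n; elim: n A Hn => [|n IH] A Hn.
  by move/eqP: Hn; rewrite cards_eq0 => /eqP ->; rewrite mu0 mul0r.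
have : (0 < #|A|)%N by rewrite Hn.
case/card_gt0P => a aA.
rewrite -(setD1K aA) muD; last by rewrite disjoints1 !inE eqxx.
have hc : #|A :\ a| = n by have := cardsD1 a A; rewrite aA Hn add1n => -[].
have := IH _ hc; have := @mu_single _ _ v C mu a SC Hmu.
rewrite -natr1 mulrDl mul1r; lra.
Qed.

Set Implicit Arguments. Unset Strict Implicit.


Lemma mu_mod (T : finType) (R : realType) (mu : {set T} -> R) A B :
  additive_sf mu -> mu (A :&: B) + mu (A :|: B) = mu A + mu B.
Proof.
move=> [_ muD].
have e1 : A = (A :&: B) :|: (A :\: B) by rewrite setID.
have e2 : A :|: B = B :|: (A :\: B).
  by apply/setP => x; rewrite !inE; case: (x \in A); case: (x \in B).
have d1 : [disjoint A :&: B & A :\: B].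
  by rewrite -setI_eq0; apply/eqP/setP => x; rewrite !inE; case: (x \in A); case: (x \in B).
have d2 : [disjoint B & A :\: B].
  by rewrite -setI_eq0; apply/eqP/setP => x; rewrite !inE; case: (x \in A); case: (x \in B).
have eA : mu A = mu (A :&: B) + mu (A :\: B) by rewrite -muD // -e1.
rewrite e2 (muD _ _ d2) eA; lra.
Qed.

Definition fam (T : finType) (R : realType) (w : {set T} -> R) :=
  exists C mu, Sigma_chain C /\ is_mu_v_I w C mu.

Lemma scm_out (T : finType) (R : realType) (w : {set T} -> R) (X : {set T}) :
  ~ fam w -> sup_chain_measures w X = 0.
Proof.
move=> nf; apply: sup_out => -[[x [C [mu [SC [Hm _]]]]] _].
by apply: nf; exists C, mu.
Qed.

Lemma scm_ub (T : finType) (R : realType) (w : {set T} -> R) (X : {set T}) C mu :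
  Sigma_chain C -> is_mu_v_I w C mu -> mu X <= sup_chain_measures w X.
Proof.
move=> SC Hm; apply: ub_le_sup; last by exists C, mu.
exists (#|X|%:R * (2 * \sum_(Y : {set T}) `|w Y|)).
rewrite /classical_sets.ubound /classical_sets.mkset =>  x [C' [mu' [SC' [Hm' ->]]]]; exact: (@mu_bound _ _ w C' mu').
Qed.

Lemma scm_glb (T : finType) (R : realType) (w : {set T} -> R) (X : {set T}) y :
  fam w -> (forall C mu, Sigma_chain C -> is_mu_v_I w C mu -> mu X <= y) ->
  sup_chain_measures w X <= y.
Proof.
move=> [C [mu [SC Hm]]] H; apply: ge_sup.
  by red; exists (mu X), C, mu.
rewrite /classical_sets.ubound /classical_sets.mkset => x [C' [mu' [SC' [Hm' ->]]]]; exact: (H C' mu' SC' Hm').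
Qed.

Lemma scm0 (T : finType) (R : realType) (w : {set T} -> R) :
  fam w -> sup_chain_measures w set0 = 0.
Proof.
move=> f; apply/le_anti/andP; split.
  by apply: scm_glb => // C mu _ [[-> _] _].
have [C [mu [SC Hm]]] := f.
have := @scm_ub _ _ w set0 C mu SC Hm; have [[-> _] _] := Hm; done.
Qed.

Lemma scmT (T : finType) (R : realType) (w : {set T} -> R) :
  fam w -> sup_chain_measures w setT = w setT.
Proof.
move=> f; apply/le_anti/andP; split.
  by apply: scm_glb => // C mu [_ [_ [CT _]]] [_ ->].
have [C [mu [SC Hm]]] := f.
have := @scm_ub _ _ w setT C mu SC Hm.
by have [_ ->] := Hm; case: SC => _ [_ [CT _]].
Qed.

Lemma scm_disj (T : finType) (R : realType) (w : {set T} -> R) A B :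
  fam w -> A :&: B = set0 ->
  sup_chain_measures w (A :&: B) + sup_chain_measures w (A :|: B) <=
  sup_chain_measures w A + sup_chain_measures w B.
Proof.
move=> f e; rewrite e scm0 // add0r; apply: scm_glb => // C mu SC Hm.
have [[_ muD] _] := Hm.
rewrite muD; last by rewrite -setI_eq0 e.
have := @scm_ub _ _ w A C mu SC Hm; have := @scm_ub _ _ w B C mu SC Hm; lra.
Qed.

Lemma scm_cover (T : finType) (R : realType) (w : {set T} -> R) A B :
  fam w -> A :|: B = setT ->
  sup_chain_measures w (A :&: B) + sup_chain_measures w (A :|: B) <=
  sup_chain_measures w A + sup_chain_measures w B.
Proof.
move=> f e; rewrite e scmT //.
suff : sup_chain_measures w (A :&: B) <= sup_chain_measures w A + sup_chain_measures w B - w setT by lra.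
apply: scm_glb => // C mu SC Hm.
have := @mu_mod _ _ mu A B (proj1 Hm); rewrite e.
have CT : [set: T] \in C by case: SC => _ [_ [CT _]].
have [_ muv] := Hm; rewrite (muv _ CT).
have := @scm_ub _ _ w A C mu SC Hm; have := @scm_ub _ _ w B C mu SC Hm; lra.
Qed.

Unset Implicit Arguments. Set Strict Implicit.


Theorem proposition21 (R : realType) (m : nat) (T : finType) (hm : #|T| = m) :
  (forall (v : {set T} -> R), (forall A, 0 <= v A) ->
     forall A B : {set T},
       (A = set0 \/ B = set0 \/ A = [set: T] \/ B = [set: T] \/
        A \subset B \/ B \subset A \/ A = B) ->
       v (A :&: B) + v (A :|: B) = v A + v B)
  /\
  (forall (v : nat -> {set T} -> R),
     (forall A, 0 <= v 0%N A) -> nondecreasing_sf (v 0%N) -> v 0%N set0 = 0 ->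
     (forall (n : nat) (A : {set T}), v n.+1 A = sup_chain_measures (v n) A) ->
     forall (n : nat), (1 <= n)%N ->
     forall A B : {set T},
       (A :&: B = set0 \/ A :|: B = [set: T] \/ #|A| = 1%N \/ (#|A| + 1)%N = m) ->
       v n (A :&: B) + v n (A :|: B) <= v n A + v n B).
Proof.
split.
  move=> v _ A B [->|[->|[->|[->|[AB|[BA|->]]]]]].
  - by rewrite set0I set0U.
  - by rewrite setI0 setU0 addrC.
  - by rewrite setTI setTU addrC.
  - by rewrite setIT setUT.
  - by rewrite (setIidPl AB) (setUidPr AB).
  - by rewrite (setIidPr BA) (setUidPl BA) addrC.
  - by rewrite setIid setUid.
move=> v _ _ _ hv [//|k] _ A B hAB; rewrite !hv.
set w := v k.
have [f|nf] := classic (fam w); last first.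
  by rewrite !(@scm_out _ _ w _ nf) !addr0.
have eqc : forall X Y : {set T}, X \subset Y ->
    sup_chain_measures w (X :&: Y) + sup_chain_measures w (X :|: Y) <=
    sup_chain_measures w X + sup_chain_measures w Y.
  by move=> X Y XY; rewrite (setIidPl XY) (setUidPr XY).
case: hAB => [e|[e|[h1|h2]]].
- exact: scm_disj.
- exact: scm_cover.
- have /cards1P [a Aa] : #|A| == 1%N by rewrite h1.
  case aB: (a \in B).
    by apply: eqc; rewrite Aa sub1set.
  apply: scm_disj => //; apply/setP => x; rewrite Aa !inE.
  by case: eqVneq => [->|]; rewrite ?aB.
- have : #|~: A| == 1%N.
    by have := cardsC A; rewrite hm -h2 => /eqP; rewrite eqn_add2l.
  case/cards1P => a Aa.
  have eA : A = ~: [set a] by rewrite -Aa setCK.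
  case aB: (a \in B).
    apply: scm_cover => //; apply/setP => x; rewrite eA !inE.
    by case: eqVneq => [->|]; rewrite ?aB.
  have BA : B \subset A.
    by rewrite eA; apply/subsetP => x xB; rewrite !inE; apply/eqP => xa; rewrite -xa xB in aB.
  by rewrite setIC setUC [X in _ <= X]addrC; apply: eqc.
Qed.
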